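(* Assume in addition that $\mathbb{X}_f$ contains an open neighborhood of the origin and that $\mathbb{X}$ is compact. Then $V$ is a Lyapunov function on $\mathbb{X}$ for the closed-loop system $x^+=f(x,\kappa(x))$. That is, $\mathbb{X}$ is invariant under the closed loop, and there are class $\mathcal{K}_\infty$ functions $\alpha_1,\beta$ with $\alpha_1(|x|)\le V(x)\le\beta(|x|)$ and $V(f(x,\kappa(x)))\le V(x)-\alpha_1(|x|)$ for all $x\in\mathbb{X}$. Consequently the origin is asymptotically stable for the closed-loop system $x^+=f(x,\kappa(x))$ on $\mathbb{X}$.
   Context: Consider the discrete-time controlled system $x^+=f(x,u)$ with state $x\in\mathbb{R}^{n}$ and control $u\in\mathbb{R}^{m}$, constraint sets $\mathbb{X}\subset\mathbb{R}^n$, $\mathbb{U}\subset\mathbb{R}^m$, $\mathbb{Y}\subset\mathbb{R}^p$, and a constraint function $h(x,u)\in\mathbb{R}^p$. A control $u$ is feasible at $x\in\mathbb{X}$ if $u\in\mathbb{U}$, $f(x,u)\in\mathbb{X}$ and $h(x,u)\in\mathbb{Y}$. A control sequence $(u(0),\ldots,u(N-1))$ is feasible from $x$ if, for the state sequence defined by $x(0)=x$ and $x(k+1)=f(x(k),u(k))$, each $u(k)$ is feasible at $x(k)$. We are given a stage cost $l(x,u)$, a terminal set $\mathbb{X}_f$ and a terminal cost $V_f$ defined on $\mathbb{X}_f$. Horizon-$N$ problem at $x$: minimize $\sum_{k=0}^{N-1}l(x(k),u(k))+V_f(x(N))$ over control sequences that are feasible from $x$ and satisfy $x(N)\in\mathbb{X}_f$.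 Let $V_N^0(x)$ be its minimum value, which is assumed to be attained whenever the feasible set is nonempty. Let $(u^0_N(0),\ldots,u^0_N(N-1))$ be a minimizer, and set $\kappa_N(x)=u_N^0(0)$. For $N=0$, $V_0^0(x)=V_f(x)$ for $x\in\mathbb{X}_f$. Standing assumptions: (A1) $f,l,h,V_f$ are continuous on an open set containing $\mathbb{X}\times\mathbb{U}$ (for $V_f$, an open set containing $\mathbb{X}_f$). The stage cost $l$ is nonnegative definite in $(x,u)$ and positive definite in $u$. $V_f$ is positive definite on $\mathbb{X}_f$. Moreover $f(0,0)=0$, $l(0,0)=0$ and $V_f(0)=0$. (A2) $\mathbb{X}$ and $\mathbb{X}_f$ are closed, $\mathbb{X}_f\subset\mathbb{X}$, $\mathbb{U}$ is compact, and $\mathbb{X},\mathbb{X}_f,\mathbb{U}$ each contain a neighborhood of the origin. (A3) For every $x\in\mathbb{X}_f$ there is a control $u$ feasible at $x$ with $f(x,u)\in\mathbb{X}_f$ and $l(x,u)+V_f(f(x,u))\le V_f(x)$. (A4) For every $x\in\mathbb{X}$ there exist an integer $N\ge0$ and a feasible control sequence of length $N$ from $x$ whose state sequence satisfies $x(N)\in\mathbb{X}_f$. For $x\in\mathbb{X}$, $N(x)$ denotes the minimum such $N$. (A5) There is an integer $M\ge 0$ with $N(x)\le M$ for all $x\in\mathbb{X}$. (A6) There are class $\mathcal{K}_\infty$ functions $\alpha_1,\alpha_2$ with $l(x,u)\ge\alpha_1(|x|)$ for all $x\in\mathbb{X}$, $u\in\mathbb{U}$, and $V_f(x)\le\alpha_2(|x|)$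 for all $x\in\mathbb{X}_f$. Define $V(x)=V^0_{N(x)}(x)$ for $x\in\mathbb{X}$. For $N(x)\ge1$ set $\kappa(x)=\kappa_{N(x)}(x)$. For $N(x)=0$ (equivalently $x\in\mathbb{X}_f$), let $\kappa(x)$ be a feasible control $u$ as in (A3). *)

(* Defs.v *)
From HB Require Import structures.
From mathcomp Require Import all_boot all_order all_algebra.
From mathcomp Require Import all_classical all_reals all_analysis.
Set Implicit Arguments. Unset Strict Implicit. Unset Printing Implicit Defensive.
Import Order.TTheory GRing.Theory Num.Theory numFieldNormedType.Exports.
Local Open Scope classical_set_scope.
Local Open Scope ring_scope.

Definition enorm (R : realType) (n : nat) (x : 'rV[R]_n) : R :=
  Num.sqrt (\sum_(i < n) x ord0 i ^+ 2).

Definition classKinf (R : realType) (a : R -> R) : Prop :=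
  [/\ a 0 = 0,
      {within `[0, +oo[%classic, continuous a},
      (forall s t, 0 <= s -> s < t -> a s < a t) &
      (forall M, exists s, 0 <= s /\ M < a s)].

Definition cont_on_open_nbhd (T U : topologicalType) (A : set T) (F : T -> U) : Prop :=
  exists O : set T, [/\ open O, A `<=` O & forall z, O z -> {for z, continuous F}].

Section MPC.
Variables (R : realType) (n m p : nat).
Variables (f : 'rV[R]_n -> 'rV[R]_m -> 'rV[R]_n)
          (h : 'rV[R]_n -> 'rV[R]_m -> 'rV[R]_p)
          (l : 'rV[R]_n -> 'rV[R]_m -> R) (Vf : 'rV[R]_n -> R)
          (X : set 'rV[R]_n) (U : set 'rV[R]_m) (Y : set 'rV[R]_p)
          (Xf : set 'rV[R]_n).

Fixpoint traj (x : 'rV[R]_n) (u : nat -> 'rV[R]_m) (k : nat) : 'rV[R]_n :=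
  match k with
  | 0 => x
  | k'.+1 => f (traj x u k') (u k')
  end.

Definition feasible (x : 'rV[R]_n) (u : 'rV[R]_m) : Prop :=
  [/\ X x, U u, X (f x u) & Y (h x u)].

(* (u(0),...,u(N-1)) is feasible from x; entries u(k), k >= N, are irrelevant *)
Definition feasible_seq (N : nat) (x : 'rV[R]_n) (u : nat -> 'rV[R]_m) : Prop :=
  forall k, (k < N)%N -> feasible (traj x u k) (u k).

Definition admissible (N : nat) (x : 'rV[R]_n) (u : nat -> 'rV[R]_m) : Prop :=
  feasible_seq N x u /\ Xf (traj x u N).

Definition cost (N : nat) (x : 'rV[R]_n) (u : nat -> 'rV[R]_m) : R :=
  \sum_(k < N) l (traj x u k) (u k) + Vf (traj x u N).

Definition is_minimizer (N : nat) (x : 'rV[R]_n) (u : nat -> 'rV[R]_m) : Prop :=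
  admissible N x u /\ forall v, admissible N x v -> cost N x u <= cost N x v.

Definition is_opt_value (N : nat) (x : 'rV[R]_n) (v : R) : Prop :=
  (exists u, admissible N x u /\ cost N x u = v) /\
  (forall u, admissible N x u -> v <= cost N x u).

Definition min_horizon (x : 'rV[R]_n) (N : nat) : Prop :=
  (exists u, admissible N x u) /\
  (forall N', (exists u, admissible N' x u) -> (N <= N')%N).

End MPC.

Definition asympt_stable_on (R : realType) (n : nat)
  (g : 'rV[R]_n -> 'rV[R]_n) (X : set 'rV[R]_n) : Prop :=
  [/\ (forall x, X x -> X (g x)),
      (forall eps : R, 0 < eps -> exists2 del : R, 0 < del &
         forall x, X x -> enorm x < del -> forall k, enorm (iter k g x) < eps) &
      (forall x, X x -> (fun k => iter k g x) @ \oo --> (0 : 'rV[R]_n))].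

(* Main.v *)
Require Import Defs.
From HB Require Import structures.
From mathcomp Require Import all_boot all_order all_algebra.
From mathcomp Require Import all_classical all_reals all_analysis.
From mathcomp Require Import lra.
Import Order.TTheory GRing.Theory Num.Theory numFieldNormedType.Exports.
Local Open Scope classical_set_scope.
Local Open Scope ring_scope.
Set Implicit Arguments. Unset Strict Implicit.

Lemma cont_bound (R : realType) (T : topologicalType) (A : set T) (F : T -> R) :
  compact A -> {within A, continuous F} -> exists M, forall x, A x -> F x <= M.
Proof.
move=> cA cF.
have := compact_bounded (continuous_compact cF cA).
case=> M [Mr HM].
exists (M + 1) => x Ax.
have : `|F x| <= M + 1.
  by apply: (HM (M+1)) => //=; [rewrite ltrDl | exists x].
exact: le_trans (ler_norm _).
Qed.

Lemma ex_min_nat (P : nat -> Prop) : (exists N, P N) ->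
  exists N, P N /\ forall N', P N' -> (N <= N')%N.
Proof.
move=> [N PN].
have ex : exists N, `[< P N >] by exists N; apply/asboolP.
case: (ex_minnP ex) => k /asboolP Pk Hk; exists k; split => // N' PN'.
by apply: Hk; apply/asboolP.
Qed.

Lemma enorm_ge0 (R : realType) (n : nat) (x : 'rV[R]_n) : 0 <= enorm x.
Proof. exact: sqrtr_ge0. Qed.

Lemma norm_le_enorm (R : realType) (n : nat) (x : 'rV[R]_n) : `|x| <= enorm x.
Proof.
have -> : `|x| = mx_norm x by [].
have [x0|xn0] := eqVneq (mx_norm x) 0.
  by rewrite x0 enorm_ge0.
have [[i j] ->] := mx_norm_neq0 xn0.
rewrite /= (ord1 i) /enorm -sqrtr_sqr ler_sqrt; last first.
  by apply: sumr_ge0 => k _; rewrite sqr_ge0.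
rewrite (bigD1 j) //= lerDl; apply: sumr_ge0 => k _; exact: sqr_ge0.
Qed.

Lemma cvg_from_enorm (R : realType) (n : nat) (u : nat -> 'rV[R]_n) :
  (forall e : R, 0 < e -> exists j, forall k, (j <= k)%N -> enorm (u k) < e) ->
  u @ \oo --> (0 : 'rV[R]_n).
Proof.
move=> H; apply/cvgrPdist_lt => e e0; have [j Hj] := H e e0.
near=> k; rewrite sub0r normrN.
have := norm_le_enorm (u k); move=> /le_lt_trans; apply; apply: Hj; near: k; exact: nbhs_infty_ge.
Unshelve. all: by end_near. Qed.

Lemma Kinf_small (R : realType) (a : R -> R) (e : R) : classKinf a -> 0 < e ->
  exists d, 0 < d /\ forall s, 0 <= s -> s <= d -> a s < e.
Proof.
case=> a0 ca inc unb e0.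
have /continuous_within_itvcyP [_ cr] := ca.
move/cvgrPdist_lt : cr => /(_ e e0) H.
have [t [t0 Ht]] := filter_ex (filterI (nbhs_right_gt 0) H).
exists t; split => // s s0 st.
rewrite a0 sub0r normrN in Ht.
have Hat : a t < e by apply: le_lt_trans (ler_norm _) Ht.
apply: le_lt_trans Hat.
have [<-|lt] := eqVneq s t; first by [].
by apply/ltW/inc => //; rewrite lt_neqAle lt st.
Qed.

Lemma Kinf_ge0 (R : realType) (a : R -> R) s : classKinf a -> 0 <= s -> 0 <= a s.
Proof.
case=> a0 _ inc _; rewrite le_eqVlt => /predU1P[<-|s0]; first by rewrite a0.
by rewrite -a0 ltW // inc.
Qed.

Lemma Kinf_le (R : realType) (a : R -> R) s t : classKinf a -> 0 <= s -> s <= t -> a s <= a t.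
Proof.
case=> _ _ inc _ s0; rewrite le_eqVlt => /predU1P[->//|st].
by rewrite ltW // inc.
Qed.

Lemma Kinf_lt_inv (R : realType) (a : R -> R) s t : classKinf a -> 0 <= t -> a s < a t -> 0 <= s -> s < t.
Proof.
move=> aK t0 ast s0; rewrite ltNge; apply/negP => ts.
by have := Kinf_le aK t0 ts; rewrite leNgt ast.
Qed.

Unset Implicit Arguments. Set Strict Implicit.

Theorem proposition4 (R : realType) (n m p : nat)
  (f : 'rV[R]_n -> 'rV[R]_m -> 'rV[R]_n) (h : 'rV[R]_n -> 'rV[R]_m -> 'rV[R]_p)
  (l : 'rV[R]_n -> 'rV[R]_m -> R) (Vf : 'rV[R]_n -> R)
  (X Xf : set 'rV[R]_n) (U : set 'rV[R]_m) (Y : set 'rV[R]_p)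
  (alpha1 alpha2 : R -> R)
  (V : 'rV[R]_n -> R) (kappa : 'rV[R]_n -> 'rV[R]_m) :
  (* (A1) *)
  cont_on_open_nbhd (X `*` U) (fun z => f z.1 z.2) ->
  cont_on_open_nbhd (X `*` U) (fun z => l z.1 z.2) ->
  cont_on_open_nbhd (X `*` U) (fun z => h z.1 z.2) ->
  cont_on_open_nbhd Xf Vf ->
  (forall x u, X x -> U u -> 0 <= l x u) ->
  (forall x u, X x -> U u -> u != 0 -> 0 < l x u) ->
  (forall x, Xf x -> x != 0 -> 0 < Vf x) ->
  f 0 0 = 0 -> l 0 0 = 0 -> Vf 0 = 0 ->
  (* (A2) *)
  closed X -> closed Xf -> Xf `<=` X -> compact U ->
  nbhs (0 : 'rV[R]_n) X -> nbhs (0 : 'rV[R]_n) Xf -> nbhs (0 : 'rV[R]_m) U ->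
  (* (A3) *)
  (forall x, Xf x -> exists u, [/\ feasible f h X U Y x u, Xf (f x u) &
                                   l x u + Vf (f x u) <= Vf x]) ->
  (* (A4) *)
  (forall x, X x -> exists N u, admissible f h X U Y Xf N x u) ->
  (* (A5) *)
  (exists M : nat, forall x N, X x -> min_horizon f h X U Y Xf x N -> (N <= M)%N) ->
  (* (A6) *)
  classKinf alpha1 -> classKinf alpha2 ->
  (forall x u, X x -> U u -> alpha1 (enorm x) <= l x u) ->
  (forall x, Xf x -> Vf x <= alpha2 (enorm x)) ->
  (* minimum of the horizon-N problem attained whenever feasible *)
  (forall N x, (exists u, admissible f h X U Y Xf N x u) ->
     exists u, is_minimizer f h l Vf X U Y Xf N x u) ->
  (* additional assumptions of the proposition *)
  (exists O : set 'rV[R]_n, [/\ open O, O 0 & O `<=` Xf]) ->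
  compact X ->
  (* V(x) = V^0_{N(x)}(x) *)
  (forall x N, X x -> min_horizon f h X U Y Xf x N ->
     is_opt_value f h l Vf X U Y Xf N x (V x)) ->
  (* kappa(x) = first element of a minimizer of the horizon-N(x) problem, N(x) >= 1 *)
  (forall x N, X x -> min_horizon f h X U Y Xf x N -> (0 < N)%N ->
     exists u, is_minimizer f h l Vf X U Y Xf N x u /\ u 0%N = kappa x) ->
  (* kappa(x) for N(x) = 0: a control as in (A3) *)
  (forall x, X x -> min_horizon f h X U Y Xf x 0 ->
     [/\ feasible f h X U Y x (kappa x), Xf (f x (kappa x)) &
         l x (kappa x) + Vf (f x (kappa x)) <= Vf x]) ->
  (* conclusion *)
  [/\ (forall x, X x -> X (f x (kappa x))),
      (exists beta : R -> R, classKinf beta /\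
         forall x, X x ->
           [/\ alpha1 (enorm x) <= V x, V x <= beta (enorm x) &
               V (f x (kappa x)) <= V x - alpha1 (enorm x)]) &
      asympt_stable_on (fun x => f x (kappa x)) X].
Proof.
Proof.
move=> fc lc hc Vfc l0 lpos Vfpos f00 l00 Vf0 cX cXf XfX cU nX nXf nU A3 A4 [M HM]
  a1K a2K a1l a2Vf Amin [Ob [oO O0 OXf]] kX HV Hk1 Hk0.
set g := fun x => f x (kappa x).
pose adm := admissible f h X U Y Xf.
pose mh := min_horizon f h X U Y Xf.
have Nx : forall x, X x -> exists N, mh x N.
  move=> x Xx; have [N [u Hu]] := A4 x Xx.
  have [N0 HN0] := @ex_min_nat (fun N => exists u, adm N x u) (ex_intro _ N (ex_intro _ u Hu)).
  by exists N0.
have Vfge0 : forall x, Xf x -> 0 <= Vf x.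
  move=> x Xfx; have [->|x0] := eqVneq x 0; first by rewrite Vf0.
  exact/ltW/Vfpos.
have adm0 : forall x, Xf x -> mh x 0%N.
  move=> x Xfx; split => //; exists (fun _ => 0); split => //.
have adm_X : forall N x u, adm N x u -> forall k, (k < N)%N -> X (traj f x u k) /\ U (u k).
  by move=> N x u [Hf _] k kN; case: (Hf k kN).
have opt0 : forall x v, is_opt_value f h l Vf X U Y Xf 0 x v -> v = Vf x.
  by move=> x v [[u [_ <-]] _]; rewrite /cost big_ord0 add0r.
have optN : forall N x u v, is_minimizer f h l Vf X U Y Xf N x u ->
    is_opt_value f h l Vf X U Y Xf N x v -> v = cost f l Vf N x u.
  move=> N x u v [Ha Hm] [[u' [Ha' <-]] Hv]; apply/le_anti/andP; split.
    exact: Hv.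
  exact: Hm.
have Hinv : forall x, X x -> X (g x).
  move=> x Xx; have [N HN] := Nx x Xx.
  case: N HN => [|N] HN; first by case: (Hk0 x Xx HN) => -[].
  have [u [[[Hf _] _] u0]] := Hk1 x N.+1 Xx HN isT.
  by case: (Hf 0%N isT) => _ _ H _; rewrite /g -u0; exact: H.
have Hlow : forall x, X x -> alpha1 (enorm x) <= V x.
  move=> x Xx; have [N HN] := Nx x Xx.
  have [[u [Ha <-]] _] := HV x N Xx HN.
  case: N HN Ha => [|N] HN Ha.
    have Xfx : Xf x := proj2 Ha.
    rewrite /cost big_ord0 add0r /=.
    have [u' [[_ Uu' _ _] Xf1 Hd]] := A3 x Xfx.
    have := a1l x u' Xx Uu'; have := Vfge0 _ Xf1; lra.
  rewrite /cost big_ord_recl /=.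
  have [_ U0] := adm_X _ _ _ Ha 0%N isT.
  have H1 := a1l x (u 0%N) Xx U0.
  have H2 : 0 <= \sum_(i < N) l (traj f x u (lift ord0 i)) (u (lift ord0 i)).
    apply: sumr_ge0 => k _.
    have [Xk Uk] := adm_X _ _ _ Ha _ (ltn_ord (lift ord0 k)); exact: l0.
  have H3 := Vfge0 _ (proj2 Ha).
  lra.
have [Lb HLb] : exists Lb, forall z, (X `*` U) z -> l z.1 z.2 <= Lb.
  apply: cont_bound; first exact: compact_setX.
  case: lc => O1 [_ sub1 c1]; apply: continuous_in_subspaceT => z.
  rewrite in_setE => Hz; exact: c1 (sub1 _ Hz).
have [Fb HFb] : exists Fb, forall x, Xf x -> Vf x <= Fb.
  apply: cont_bound; first exact: (subclosed_compact cXf kX XfX).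
  case: Vfc => O1 [_ sub1 c1]; apply: continuous_in_subspaceT => z.
  rewrite in_setE => Hz; exact: c1 (sub1 _ Hz).
pose C := M%:R * Num.max Lb 0 + Num.max Fb 0.
have C0 : 0 <= C.
  by apply: addr_ge0; [apply: mulr_ge0 => //; rewrite le_max lexx orbT | rewrite le_max lexx orbT].
have Hup : forall x, X x -> V x <= C.
  move=> x Xx; have [N HN] := Nx x Xx; have NM := HM x N Xx HN.
  have [[u [Ha <-]] _] := HV x N Xx HN.
  rewrite /cost; apply: lerD.
    apply: (@le_trans _ _ (\sum_(k < N) Num.max Lb 0)).
      apply: ler_sum => k _; have [Xk Uk] := adm_X _ _ _ Ha k (ltn_ord k).
      apply: le_trans (HLb (_, _) (conj Xk Uk)) _; by rewrite le_max lexx.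
    rewrite sumr_const card_ord -[X in X <= _]mulr_natl; apply: ler_wpM2r. 
      by rewrite le_max lexx orbT.
    by rewrite ler_nat.
  apply: le_trans (HFb _ (proj2 Ha)) _; by rewrite le_max lexx.
have [r r0 Hr] : exists2 r : R, 0 < r & forall x, enorm x < r -> Xf x.
  have : nbhs (0 : 'rV[R]_n) Ob by apply: open_nbhs_nbhs; split.
  move=> /nbhs_ballP [r r0 Hb]; exists r => // x Hx; apply: OXf; apply: Hb.
  rewrite -ball_normE /ball_ /= sub0r normrN.
  have := norm_le_enorm x; move=> /le_lt_trans; apply; exact: Hx.
pose beta := fun s => alpha2 s + C / r * s.
have q0 : 0 <= C / r by apply: divr_ge0 => //; exact: ltW.
have bK : classKinf beta.
  case: (a2K) => a20 ca2 inc2 unb2; split.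
  - by rewrite /beta a20 mulr0 addr0.
  - apply: (@within_continuousD _ _ _ _ alpha2 ( *%R (C / r))) => //.
    apply: continuous_in_subspaceT => z _; exact: mulrl_continuous.
  - move=> s t s0 st; rewrite /beta; apply: ltr_leD; first exact: inc2.
    by apply: ler_wpM2l => //; exact: ltW.
  - move=> M'; have [s [s0 Hs]] := unb2 M'; exists s; split => //.
    rewrite /beta; have := mulr_ge0 q0 s0; lra.
have Hbeta : forall x, X x -> V x <= beta (enorm x).
  move=> x Xx; rewrite /beta.
  have e0 := enorm_ge0 x.
  have a2ge := Kinf_ge0 a2K e0.
  have [ltr|ger] := ltP (enorm x) r.
    have Xfx := Hr x ltr.
    rewrite (opt0 _ _ (HV x 0%N Xx (adm0 _ Xfx))).
    have := a2Vf x Xfx; have := mulr_ge0 q0 e0; lra.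
  have := Hup x Xx.
  have qr : C / r * r = C by rewrite divfK // gt_eqF.
  have := mulr_ge0 q0 (let H : 0 <= enorm x - r := ltac:(rewrite subr_ge0; exact: ger) in H) .
  move: qr; set q := C / r; nra.
have Hdec : forall x, X x -> V (g x) <= V x - alpha1 (enorm x).
  move=> x Xx; have Xg := Hinv x Xx; have [N HN] := Nx x Xx.
  case: N HN => [|N] HN.
    have [[_ Uk _ _] Xf1 Hd] := Hk0 x Xx HN.
    have Xfx : Xf x by case: HN => -[u [_ H]] _.
    rewrite (opt0 _ _ (HV x 0%N Xx HN)) (opt0 _ _ (HV _ 0%N Xg (adm0 _ Xf1))).
    have := a1l x (kappa x) Xx Uk; rewrite /g; lra.
  have [u [[Ha Hm] u0]] := Hk1 x N.+1 Xx HN isT.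
  have Vx := optN _ _ _ _ (conj Ha Hm) (HV x N.+1 Xx HN).
  have Uk : U (kappa x) by rewrite -u0; case: (Ha.1 0%N isT).
  pose v := fun k => u k.+1.
  have trv : forall k, traj f (g x) v k = traj f x u k.+1.
    elim => [|k IH] /=; first by rewrite /g -u0.
    by rewrite IH.
  have Hav : adm N (g x) v.
    case: Ha => Hf HXf; split; last by rewrite trv.
    move=> k kN; rewrite trv; exact: Hf k.+1 kN.
  have costv : cost f l Vf N (g x) v = cost f l Vf N.+1 x u - l x (kappa x).
    rewrite /cost big_ord_recl.
    have -> : \sum_(i < N) l (traj f x u (lift ord0 i)) (u (lift ord0 i)) =
              \sum_(k < N) l (traj f (g x) v k) (v k).
      by apply: eq_bigr => i _; rewrite lift0 trv.
    rewrite trv /= -u0; lra.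
  have [N1 HN1] := Nx _ Xg.
  have N1le : (N1 <= N)%N by apply: HN1.2; exists v.
  have N1ge : (N <= N1)%N.
    case: (HN1) => [[w Hw] _].
    pose w' := fun k => if k is k'.+1 then w k' else u 0%N.
    have trw : forall k, traj f x w' k.+1 = traj f (g x) w k.
      elim => [|k IH]; first by rewrite /= /g -u0.
      by change (f (traj f x w' k.+1) (w k) = f (traj f (g x) w k) (w k)); rewrite IH.
    have : (N.+1 <= N1.+1)%N.
      apply: HN.2; exists w'; case: Hw => Hf HXf; split; last by rewrite trw.
      case => [_|k kN]; first exact: (Ha.1 0%N isT).
      rewrite trw; exact: Hf k kN.
    by [].
  have eN : N1 = N by apply/eqP; rewrite eqn_leq N1le N1ge.
  rewrite eN in HN1.
  have [_ Hopt] := HV _ N Xg HN1.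
  have := Hopt v Hav; rewrite costv -Vx.
  have := a1l x (kappa x) Xx Uk; lra.
have Xit : forall x, X x -> forall k, X (iter k g x).
  by move=> x Xx; elim => [|k IH] //=; exact: Hinv.
have Vdec : forall x, X x -> forall k, V (iter k g x) <= V x.
  move=> x Xx; elim => [|k IH] //=; apply: le_trans _ IH.
  have := Hdec _ (Xit x Xx k); have := Kinf_ge0 a1K (enorm_ge0 (iter k g x)); lra.
have a1pos : forall e, 0 < e -> 0 < alpha1 e.
  move=> e e0; case: (a1K) => a10 _ inc1 _; have := inc1 0 e (lexx 0) e0; by rewrite a10.
have Hstab : forall eps : R, 0 < eps -> exists2 del : R, 0 < del &
    forall x, X x -> enorm x < del -> forall k, enorm (iter k g x) < eps.
  move=> eps eps0; have [d [d0 Hd]] := Kinf_small bK (a1pos _ eps0).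
  exists d => // x Xx ed k.
  have H1 := Hlow _ (Xit x Xx k); have H2 := Vdec x Xx k; have H3 := Hbeta x Xx.
  have H4 := Hd (enorm x) (enorm_ge0 x) (ltW ed).
  apply: (Kinf_lt_inv a1K (ltW eps0)) _ (enorm_ge0 _); lra.
split => //.
  by exists beta; split => // x Xx; split; [exact: Hlow | exact: Hbeta | exact: Hdec].
split => // x Xx; apply: cvg_from_enorm => eps eps0.
have [d d0 Hd] := Hstab eps eps0.
have [j Hj] : exists j, enorm (iter j g x) < d.
  case: (pselect (exists j, enorm (iter j g x) < d)) => // Hn; exfalso.
  have Hge : forall j, d <= enorm (iter j g x).
    by move=> j; rewrite leNgt; apply/negP => Hlt; apply: Hn; exists j.
  have c0 := a1pos _ d0.
  have Hk : forall k, V (iter k g x) <= V x - k%:R * alpha1 d.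
    elim => [|k IH]; first by rewrite /= mul0r subr0.
    have := Hdec _ (Xit x Xx k).
    have := Kinf_le a1K (ltW d0) (Hge k).
    rewrite -natr1 /=; lra.
  pose k := (Num.trunc (V x / alpha1 d)).+1.
  have := truncnS_gt (V x / alpha1 d); rewrite -/k ltr_pdivrMr //.
  have := Hk k; have := Hlow _ (Xit x Xx k); have := Kinf_ge0 a1K (enorm_ge0 (iter k g x)).
  lra.
exists j => k jk; rewrite -(subnK jk) iterD; apply: Hd => //; exact: Xit.
Qed.
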